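(* The problems EE-NCL and EE-ANCL coincide: an NCL machine with two distinguished edges $e_a,e_b$ and target orientations for them is a yes-instance of EE-NCL if and only if it is a yes-instance of EE-ANCL.
   Context: An NCL machine is an undirected 3-connected 3-regular planar graph whose vertices are of two types, AND and OR; of the three edges incident to an AND vertex, one is designated its output edge and the other two its input edges. A legal configuration is an orientation of all edges such that (i) for each AND vertex, either its output edge is directed inward or both its input edges are directed inward, and (ii) for each OR vertex, at least one of its three incident edges is directed inward. A legal move reverses a single edge so that the resulting configuration is again legal. EE-NCL (Edge-to-Edge for NCL machines): given an NCL machine with two distinguished edges $e_a,e_b$ and a target orientation for each, decide whether there exist legal configurations $A$ and $B$ such that $e_a$ has its target orientation in $A$, $e_b$ has its target orientation in $B$, and some finite sequence of legal moves leads from $A$ to $B$ (edges may be reversed arbitrarily many times). EE-ANCL (asynchronous version): same input and question, except that moves are asynchronous in continuous time over a bounded timespan: any edge may start reversing at any time, and its reversal phase lasts some strictly positive amount of time (no two reversal phases of the same edge overlap, but different edges may be reversing simultaneously); while an edge is in its reversal phase its orientation is undefined and it is directed toward neither endpoint; at every time both vertex constraints (i) and (ii) must hold, counting only edges with defined orientation; and no edge is reversed infinitely many times in a bounded timespan. The question is whether one can go in this way from a legal configuration $A$ with $e_a$ in its target orientation to a configuration $B$ with $e_b$ in its target orientation. *)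

(* Defs.v *)
From Stdlib Require Import Reals.
From HB Require Import structures.
From mathcomp Require Import all_boot all_fingroup.

Set Implicit Arguments.
Unset Strict Implicit.
Unset Printing Implicit Defensive.

Section NCL.

(* An orientation [c : E -> bool] directs edge e
   from (ends e).1 to (ends e).2 when [c e = true], and the other way when
   [c e = false]. *)
Variables (V E : finType) (ends : E -> V * V).

Definition incident (v : V) (e : E) : bool :=
  ((ends e).1 == v) || ((ends e).2 == v).

Definition simple_graph : Prop :=
  (forall e, (ends e).1 != (ends e).2) /\
  (forall e f, [set (ends e).1; (ends e).2] = [set (ends f).1; (ends f).2] -> e = f).

Definition cubic : Prop := forall v : V, #|[set e | incident v e]| = 3.

Definition adj (u w : V) : bool :=
  [exists e, (ends e == (u, w)) || (ends e == (w, u))].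

Definition three_connected : Prop :=
  3 < #|V| /\
  forall S : {set V}, #|S| <= 2 -> forall u w : V, u \notin S -> w \notin S ->
    connect (fun x y => [&& x \notin S, y \notin S & adj x y]) u w.

(* Planarity via rotation systems (combinatorial maps, Heffter-Edmonds):
   darts are pairs (e, b); dart (e,true) sits at (ends e).1, (e,false) at
   (ends e).2.  A rotation system is a permutation sigma of darts whose
   cycles are exactly the sets of darts at each vertex; faces are the cycles
   of phi = sigma o alpha, alpha the dart involution.  A connected graph is
   planar iff some rotation system satisfies Euler's formula V - E + F = 2. *)
Definition dvert (d : E * bool) : V := if d.2 then (ends d.1).1 else (ends d.1).2.
Definition alpha (d : E * bool) : E * bool := (d.1, ~~ d.2).

Definition planar : Prop :=
  exists sigma phi : {perm (E * bool)},
    [/\ (forall d, dvert (sigma d) = dvert d),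
        (forall d d', dvert d = dvert d' -> d' \in porbit sigma d),
        (forall d, phi d = sigma (alpha d)) &
        #|V| + #|porbits phi| = #|E| + 2].

(* NCL machine: vertex types (isAND v = true for AND vertices, false for OR)
   and designated output edge [out v] of each AND vertex; the input edges of
   an AND vertex are its two other incident edges. *)
Variables (isAND : V -> bool) (out : V -> E).

Definition ncl_machine : Prop :=
  [/\ simple_graph, cubic, three_connected, planar &
      forall v, isAND v -> incident v (out v)].

Definition head (b : bool) (e : E) : V := if b then (ends e).2 else (ends e).1.

(* partial orientations: None = edge currently reversing (undefined) *)
Definition inward (o : E -> option bool) (e : E) (v : V) : bool :=
  if o e is Some b then head b e == v else false.

Definition vertex_ok (o : E -> option bool) (v : V) : bool :=
  if isAND v then
    inward o (out v) v ||
    [forall e, (incident v e && (e != out v)) ==> inward o e v]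
  else [exists e, incident v e && inward o e v].

Definition constraints_ok (o : E -> option bool) : bool := [forall v, vertex_ok o v].

Definition legal (c : {ffun E -> bool}) : bool := constraints_ok (fun e => Some (c e)).

Definition legal_move (c c' : {ffun E -> bool}) : bool :=
  [&& legal c, legal c' & #|[set e | c e != c' e]| == 1].

Definition EE_NCL (ea : E) (ta : bool) (eb : E) (tb : bool) : Prop :=
  exists A B : {ffun E -> bool},
    [/\ legal A, legal B, A ea = ta, B eb = tb & connect legal_move A B].

Definition Rleb (x y : R) : bool := if Rle_dec x y then true else false.
Definition Rltb (x y : R) : bool := if Rlt_dec x y then true else false.

Definition wf_phases (P : E -> seq (R * R)) : Prop :=
  forall e,
    (forall i, i < size (P e) ->
       Rlt (nth (R0, R0) (P e) i).1 (nth (R0, R0) (P e) i).2) /\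
    (forall i j, i < j -> j < size (P e) ->
       Rle (nth (R0, R0) (P e) i).2 (nth (R0, R0) (P e) j).1 \/
       Rle (nth (R0, R0) (P e) j).2 (nth (R0, R0) (P e) i).1).

Definition state_at (A : {ffun E -> bool}) (P : E -> seq (R * R)) (tau : R)
    (e : E) : option bool :=
  if has (fun p => Rleb p.1 tau && Rltb tau p.2) (P e) then None
  else Some (xorb (A e) (odd (count (fun p => Rleb p.2 tau) (P e)))).

Definition final_conf (A : {ffun E -> bool}) (P : E -> seq (R * R)) (e : E) : bool :=
  xorb (A e) (odd (size (P e))).

Definition EE_ANCL (ea : E) (ta : bool) (eb : E) (tb : bool) : Prop :=
  exists (A : {ffun E -> bool}) (P : E -> seq (R * R)),
    [/\ legal A, wf_phases P,
        (forall tau : R, constraints_ok (state_at A P tau)),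
        A ea = ta & final_conf A P eb = tb].

End NCL.

(* Main.v *)
Require Import Defs.
From Stdlib Require Import Reals Lra Lia ZArith.
From HB Require Import structures.
From mathcomp Require Import all_boot all_fingroup.

Set Implicit Arguments.
Unset Strict Implicit.
Unset Printing Implicit Defensive.

Definition Reqb (x y : R) : bool := if Req_EM_T x y then true else false.
Lemma Reqb_axiom : Equality.axiom Reqb.
Proof. move=> x y; rewrite /Reqb; case: Req_EM_T => h; [exact: ReflectT|exact: ReflectF]. Qed.
HB.instance Definition _ := hasDecEq.Build R Reqb_axiom.

Lemma RlebP (x y : R) : reflect (Rle x y) (Rleb x y).
Proof. rewrite /Rleb; case: Rle_dec => h; [exact: ReflectT|exact: ReflectF]. Qed.
Lemma RltbP (x y : R) : reflect (Rlt x y) (Rltb x y).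
Proof. rewrite /Rltb; case: Rlt_dec => h; [exact: ReflectT|exact: ReflectF]. Qed.

Lemma floor_nat (tau : R) : Rle 0 tau -> exists m : nat, Rle (INR m) tau /\ Rlt tau (Rplus (INR m) 1).
Proof.
move=> h0; have [h1 h2] := base_Int_part tau.
have hz : (0 <= Int_part tau)%Z.
  have : (-1 < Int_part tau)%Z by apply: lt_IZR; lra.
  lia.
exists (Z.to_nat (Int_part tau)).
rewrite INR_IZR_INZ Z2Nat.id //; lra.
Qed.

Lemma below (l : seq R) (t s : R) : Rlt s t ->
  exists tau, [/\ Rle s tau, Rlt tau t & all (fun r => Rltb r t ==> Rleb r tau) l].
Proof.
move=> hst; elim: l => [|r l [tau [h1 h2 h3]]]; first by exists s; split => //; lra.
case: (RltbP r t) => hr.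
- exists (Rmax tau r); split.
  + by apply: Rle_trans (Rmax_l _ _).
  + by apply: Rmax_lub_lt.
  + rewrite /= ; apply/andP; split; first by apply/implyP => _; apply/RlebP; apply: Rmax_r.
    apply/allP => x hx; apply/implyP => hxt; apply/RlebP.
    move/allP: h3 => /(_ x hx); rewrite hxt /= => /RlebP; move=> hh.
    by apply: Rle_trans (Rmax_l _ _).
- exists tau; split => //=; apply/andP; split => //.
  by apply/implyP => /RltbP.
Qed.

Section Proofs.
Variables (V E : finType) (ends : E -> V * V) (isAND : V -> bool) (out : V -> E).

Definition vf (v : V) (I : E -> bool) : bool :=
  if isAND v then I (out v) || [forall e, (incident ends v e && (e != out v)) ==> I e]
  else [exists e, incident ends v e && I e].

Lemma vf_mono v (I J : E -> bool) : (forall e, I e -> J e) -> vf v I -> vf v J.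
Proof.
move=> H; rewrite /vf; case: isAND.
- case/orP => [h|/forallP h]; apply/orP; first by left; apply: H.
  right; apply/forallP => e; apply/implyP => he; apply: H; exact: (implyP (h e) he).
- case/existsP => e /andP[h1 h2]; apply/existsP; exists e; rewrite h1 /=; exact: H.
Qed.

Lemma vf_inter v (I1 I2 : E -> bool) e0 :
  (forall e, e != e0 -> I1 e = I2 e) -> ~~ (I1 e0 && I2 e0) ->
  vf v I1 -> vf v I2 -> vf v (fun e => (e != e0) && I1 e).
Proof.
move=> Heq Hn; rewrite /vf /=; case: isAND.
- case/orP => [h1|/forallP h1]; case/orP => [h2|/forallP h2].
  + case: (eqVneq (out v) e0) => [ho|ho]; first by rewrite -ho h1 h2 in Hn.
    by rewrite h1.
  + case: (eqVneq (out v) e0) => [ho|ho]; last by rewrite h1.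
    apply/orP; right; apply/forallP => e; apply/implyP => /andP[hi hne].
    have := implyP (h2 e); rewrite hi hne => /(_ isT) he.
    rewrite -ho hne /= Heq //; by rewrite -ho.
  + case: (eqVneq (out v) e0) => [ho|ho].
    * apply/orP; right; apply/forallP => e; apply/implyP => /andP[hi hne].
      have := implyP (h1 e); rewrite hi hne => /(_ isT) he.
      by rewrite -ho hne.
    * by rewrite /= Heq // h2.
  + apply/orP; right; apply/forallP => e; apply/implyP => /andP[hi hne].
    have := implyP (h1 e); rewrite hi hne => /(_ isT) he1.
    have := implyP (h2 e); rewrite hi hne => /(_ isT) he2.
    rewrite he1 andbT; apply/eqP => hee; move: Hn; by rewrite -hee he1 he2.
- case/existsP => e /andP[hi1 he1] /existsP[f /andP[hi2 hf2]].
  case: (eqVneq e e0) => [hee|hee].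
  + apply/existsP; exists f; rewrite hi2 /=.
    case: (eqVneq f e0) => [hf|hf]; first by move: he1 hf2 Hn; rewrite hee hf => -> ->.
    by rewrite Heq.
  + apply/existsP; exists e; by rewrite hi1 hee.
Qed.

Lemma ok_mono (o o' : E -> option bool) :
  (forall e b, o' e = Some b -> o e = Some b) ->
  constraints_ok ends isAND out o' -> constraints_ok ends isAND out o.
Proof.
move=> H /forallP h; apply/forallP => v.
have : vf v (fun e => inward ends o' e v) by exact: h.
apply: vf_mono => e; rewrite /inward.
by case E1: (o' e) => [b|] //; rewrite (H _ _ E1).
Qed.

Lemma inter_ok (c c' : {ffun E -> bool}) e0 :
  legal ends isAND out c -> legal ends isAND out c' -> (ends e0).1 != (ends e0).2 ->
  (forall e, e != e0 -> c e = c' e) -> c e0 != c' e0 ->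
  constraints_ok ends isAND out (fun e => if e == e0 then None else Some (c e)).
Proof.
move=> /forallP hc /forallP hc' hend Heq hne; apply/forallP => v.
have : vf v (fun e => (e != e0) && inward ends (fun e => Some (c e)) e v).
  apply: vf_inter (hc v) (hc' v).
  - by move=> e he; rewrite /inward Heq.
  - rewrite /inward /head; move: hne; case: (c e0); case: (c' e0) => //= _.
    + apply/negP => /andP[/eqP h1 /eqP h2]; move: hend; by rewrite h1 h2 eqxx.
    + apply/negP => /andP[/eqP h1 /eqP h2]; move: hend; by rewrite h1 h2 eqxx.
apply: vf_mono => e; rewrite /inward.
by case: (eqVneq e e0).
Qed.

Lemma ncl_to_ancl ea ta eb tb :
  (forall e, (ends e).1 != (ends e).2) ->
  EE_NCL ends isAND out ea ta eb tb -> EE_ANCL ends isAND out ea ta eb tb.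
Proof.
move=> hsimple [A [B [hA hB ha hb /connectP [p hp hlast]]]].
set n := size p.
pose cfg k := nth A (A :: p) k.
have hmove : forall k, k < n -> legal_move ends isAND out (cfg k) (cfg k.+1).
  by move=> k hk; exact: (pathP A hp k hk).
pose flip i e := cfg i e != cfg i.+1 e.
have hcfg : forall k e, cfg k e = xorb (A e) (odd (count (fun i => flip i e) (iota 0 k))).
  move=> k e; elim: k => [|k IH]; first by rewrite /cfg /=; case: (A e).
  rewrite -addn1 iotaD count_cat /= addn0 oddD add0n.
  move: IH; rewrite addn1 /flip; case: (cfg k e); case: (cfg k.+1 e); case: (A e); by case: (odd (count _ _)).
have hcfgn : cfg n = B.
  by rewrite /cfg -[n]/((size (A :: p)).-1) nth_last /= hlast.
pose P e := [seq (INR i, Rplus (INR i) 1) | i <- [seq i <- iota 0 n | flip i e]].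
exists A, P; split => //.
- move=> e; split.
  + move=> i; rewrite size_map => hi; rewrite (nth_map 0%N) //= ; lra.
  + move=> i j hij; rewrite size_map => hj; left.
    have hi : i < size [seq i <- iota 0 n | flip i e] by apply: ltn_trans hj.
    rewrite !(nth_map 0%N) //=.
    have := sorted_ltn_nth ltn_trans 0%N (sorted_filter ltn_trans (fun i => flip i e) (iota_ltn_sorted 0 n)).
    move=> /(_ i j hi hj hij) hlt.
    rewrite -S_INR; apply: le_INR; exact/leP.
- move=> tau.
  have hcount : forall e, count (fun p => Rleb p.2 tau) (P e) =
      count (fun i => flip i e && Rleb (Rplus (INR i) 1) tau) (iota 0 n).
    by move=> e; rewrite count_map count_filter; apply: eq_count => i /=; rewrite andbC.
  have hhas : forall e, has (fun p => Rleb p.1 tau && Rltb tau p.2) (P e) =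
      has (fun i => flip i e && (Rleb (INR i) tau && Rltb tau (Rplus (INR i) 1))) (iota 0 n).
    move=> e; rewrite has_map !has_count count_filter; congr (0 < _).
    by apply: eq_count => i /=; rewrite andbC.
  case: (Rlt_dec tau 0) => htau.
  + apply: (@ok_mono _ (fun e => Some (A e))); last exact: hA.
    move=> e b [<-]; rewrite /state_at hhas hcount.
    have -> : has (fun i => flip i e && (Rleb (INR i) tau && Rltb tau (Rplus (INR i) 1))) (iota 0 n) = false.
      apply/hasP => -[i _ /andP[_ /andP[/RlebP h _]]]; have := pos_INR i; lra.
    rewrite (eq_count (a2 := pred0)) ?count_pred0; first by case: (A e).
    move=> i /=; case: (RlebP (Rplus (INR i) 1) tau) => h; last by rewrite andbF.
    have := pos_INR i; lra.
  + have [m [hm1 hm2]] := floor_nat (Rnot_lt_le _ _ htau).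
    have hdone : forall i, Rleb (Rplus (INR i) 1) tau = (i < m).
      move=> i; case: (ltnP i m) => h.
      * apply/RlebP; rewrite -S_INR; apply: Rle_trans hm1; apply: le_INR; exact/leP.
      * apply/RlebP => h2; have : Rle (INR m) (INR i) by apply: le_INR; apply/leP.
        lra.
    have hprog : forall i, (Rleb (INR i) tau && Rltb tau (Rplus (INR i) 1)) = (i == m).
      move=> i; case: (ltngtP i m) => h.
      * have : Rle (INR i.+1) (INR m) by apply: le_INR; apply/leP.
        rewrite S_INR => h'; case: (RltbP tau (Rplus (INR i) 1)) => h2; last by rewrite andbF.
        lra.
      * have : Rle (INR m.+1) (INR i) by apply: le_INR; apply/leP.
        rewrite S_INR => h'; case: (RlebP (INR i) tau) => h2 //; lra.
      * rewrite h; apply/andP; split; [exact/RlebP | exact/RltbP].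
    case: (leqP n m) => hnm.
    * apply: (@ok_mono _ (fun e => Some (B e))); last exact: hB.
      move=> e b [<-]; rewrite /state_at hhas hcount.
      have -> : has (fun i => flip i e && (Rleb (INR i) tau && Rltb tau (Rplus (INR i) 1))) (iota 0 n) = false.
        apply/hasP => -[i hi]; rewrite hprog => /andP[_ /eqP him]; move: hi.
        rewrite mem_iota him add0n => /andP[_ h]; move: (leq_trans h hnm); by rewrite ltnn.
      rewrite (@eq_in_count _ _ (fun i => flip i e)); first by rewrite -hcfg hcfgn.
      move=> i; rewrite mem_iota add0n => /andP[_ hi] /=; rewrite hdone.
      by rewrite (leq_trans hi hnm) andbT.
    * have := hmove m hnm => /and3P[hc hc' /cards1P [e0 he0]].
      have hfl : forall e, flip m e = (e == e0).
        move=> e; move/setP: he0 => /(_ e); by rewrite !inE.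
      apply: (@ok_mono _ (fun e => if e == e0 then None else Some (cfg m e))).
      - move=> e b; rewrite /state_at hhas hcount.
        have -> : has (fun i => flip i e && (Rleb (INR i) tau && Rltb tau (Rplus (INR i) 1))) (iota 0 n) = (e == e0).
          rewrite -hfl; apply/hasP/idP => [[i hi]|hf]; first by rewrite hprog => /andP[h /eqP <-].
          exists m; [by rewrite mem_iota | by rewrite hprog eqxx andbT].
        case: (eqVneq e e0) => // _ [<-]; congr Some.
        rewrite hcfg; congr (xorb _ (odd _)).
        rewrite -{1}(subnKC (ltnW hnm)) iotaD count_cat add0n.
        rewrite (@eq_in_count _ _ (fun i => flip i e) (iota 0 m)); last first.
          by move=> i; rewrite mem_iota add0n /= hdone => ->; rewrite andbT.
        rewrite (@eq_in_count _ _ pred0 (iota m (n - m))) ?count_pred0 ?addn0 //.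
        move=> i; rewrite mem_iota /= hdone => /andP[hi _].
        by rewrite ltnNge hi andbF.
      - apply: (inter_ok hc hc' (hsimple e0)).
        + move=> e he; have := hfl e; rewrite (negbTE he) => /negbFE/eqP //.
        + by have := hfl e0; rewrite eqxx.
- by rewrite /final_conf size_map size_filter -hcfg hcfgn.
Qed.

Definition L0 (P : E -> seq (R * R)) : seq (E * (R * R)) :=
  flatten [seq [seq (f, p) | p <- P f] | f <- enum E].

Lemma count_L0 P e (q : pred (R * R)) :
  count (fun y => (y.1 == e) && q y.2) (L0 P) = count q (P e).
Proof.
have : forall s : seq E, uniq s ->
  count (fun y => (y.1 == e) && q y.2) (flatten [seq [seq (f, p) | p <- P f] | f <- s])
  = if e \in s then count q (P e) else 0.
  elim => [|f s IH] //= /andP[hf hu]; rewrite count_cat IH // count_map in_cons.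
  case: (eqVneq f e) => [<-|hfe] /=.
  - by rewrite (negbTE hf) addn0; apply: eq_count => p /=; rewrite eqxx.
  - rewrite /= (eq_count (a2 := pred0)) ?count_pred0 //.
    by move=> p /=; rewrite (negbTE hfe).
by move=> /(_ (enum E) (enum_uniq _)); rewrite mem_enum.
Qed.

Lemma ancl_to_ncl ea ta eb tb :
  EE_ANCL ends isAND out ea ta eb tb -> EE_NCL ends isAND out ea ta eb tb.
Proof.
move=> [A [P [hA hwf hall ha hb]]].
pose r := fun x y : E * (R * R) => Rleb x.2.2 y.2.2.
pose L := sort r (L0 P).
have hperm : perm_eq L (L0 P) by rewrite /L perm_sort.
have htot : total r.
  move=> x y; rewrite /r; case: (RlebP x.2.2 y.2.2) => //= h; apply/RlebP; lra.
have htr : transitive r.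
  move=> y x z /RlebP h1 /RlebP h2; apply/RlebP; lra.
have hpw : pairwise r L by rewrite -sorted_pairwise //; exact: sort_sorted.
have hcnt : forall e (q : pred (R * R)), count (fun y => (y.1 == e) && q y.2) L = count q (P e).
  by move=> e q; rewrite (seq.permP hperm) count_L0.
have hlt : forall y, y \in L -> Rlt y.2.1 y.2.2.
  move=> y hy; apply/RltbP; apply/negPn/negP => hn.
  have : 0 < count (fun z => (z.1 == y.1) && ~~ Rltb z.2.1 z.2.2) L.
    by rewrite -has_count; apply/hasP; exists y => //; rewrite eqxx.
  rewrite (hcnt y.1 (fun p => ~~ Rltb p.1 p.2)) -has_count => /hasP [pp hpp hnp].
  have [hw _] := hwf y.1; move/(nthP (R0, R0)): hpp => [i hi hnth].
  by move: hnp; rewrite -hnth => /RltbP; apply; exact: hw.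
pose D (s : seq (E * (R * R))) : {ffun E -> bool} :=
  [ffun e => xorb (A e) (odd (count (fun y => y.1 == e) s))].
have claim : forall L1 x L2, L = L1 ++ x :: L2 -> legal ends isAND out (D (rcons L1 x)).
  move=> L1 x L2 hL.
  have hxL : x \in L by rewrite hL mem_cat in_cons eqxx orbT.
  have [tau [_ htau hall']] := below (map (fun y => y.2.1) L ++ map (fun y => y.2.2) L) (hlt x hxL).
  move: hall'; rewrite all_cat => /andP[/allP hA1 /allP hA2].
  have hb1 : forall y, y \in L -> Rlt y.2.1 x.2.2 -> Rle y.2.1 tau.
    move=> y hy h; have := hA1 _ (map_f (fun y => y.2.1) hy).
    by move/RltbP: h => -> /= /RlebP.
  have hb2 : forall y, y \in L -> Rlt y.2.2 x.2.2 -> Rle y.2.2 tau.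
    move=> y hy h; have := hA2 _ (map_f (fun y => y.2.2) hy).
    by move/RltbP: h => -> /= /RlebP.
  move: (hpw); rewrite hL pairwise_cat => /and3P[/allrelP hrel _ /= /andP[/allP hxL2 _]].
  have hle : forall y, y \in rcons L1 x -> Rle y.2.2 x.2.2.
    move=> y; rewrite mem_rcons in_cons => /orP[/eqP ->|hy]; first by apply: Rle_refl.
    by apply/RlebP; apply: hrel => //; rewrite in_cons eqxx.
  have hge : forall y, y \in L2 -> Rle x.2.2 y.2.2.
    by move=> y hy; apply/RlebP; apply: hxL2.
  apply: (@ok_mono _ (state_at A P tau)); last exact: hall.
  move=> e b; rewrite /state_at; case: ifP => // hnhas [<-]; rewrite ffunE; congr Some.
  congr (xorb _ (odd _)).
  rewrite -(hcnt e (fun p => Rleb p.2 tau)) hL -cat_rcons count_cat.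
  have -> : count (fun y => (y.1 == e) && Rleb y.2.2 tau) L2 = 0.
    apply/eqP; rewrite -leqn0 leqNgt -has_count; apply/hasP => -[y hy /andP[_ /RlebP h]].
    have h3 := hge y hy; apply: (Rlt_irrefl tau); apply: Rlt_le_trans htau (Rle_trans _ _ _ h3 h).
  rewrite addn0; apply: eq_in_count => y hy /=.
  case: (eqVneq y.1 e) => //= hye; symmetry; apply/RlebP.
  have hyL : y \in L by rewrite hL -cat_rcons mem_cat hy.
  case: (Rle_lt_or_eq_dec _ _ (hle y hy)) => h; first exact: hb2.
  exfalso; move/negbT: hnhas => /negP; apply.
  have : 0 < count (fun z => (z.1 == e) && (Rleb z.2.1 tau && Rltb tau z.2.2)) L.
    rewrite -has_count; apply/hasP; exists y => //; rewrite hye eqxx /=.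
    have := hlt y hyL => hy12.
    apply/andP; split; [apply/RlebP; apply: hb1 => //; rewrite -h; exact: hy12 | apply/RltbP; rewrite h; exact: htau].
  by rewrite (hcnt e (fun p => Rleb p.1 tau && Rltb tau p.2)) -has_count.
have chain : forall L2 L1, L = L1 ++ L2 -> legal ends isAND out (D L1) ->
    connect (legal_move ends isAND out) (D L1) (D L) /\ legal ends isAND out (D L).
  elim => [|x L2 IH] L1 hL hl; first by rewrite hL cats0; split.
  have hl' := claim L1 x L2 hL.
  have hm : legal_move ends isAND out (D L1) (D (rcons L1 x)).
    rewrite /legal_move hl hl' /=; apply/cards1P; exists x.1; apply/setP => e.
    rewrite !inE !ffunE -cats1 count_cat /= addn0 oddD (eq_sym e).
    by case: (x.1 == e); case: (A e); case: (odd _).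
  have [h1 h2] := IH (rcons L1 x) (ltac:(by rewrite cat_rcons)) hl'.
  by split => //; exact: connect_trans (connect1 hm) h1.
have hD0 : D [::] = A by apply/ffunP => e; rewrite ffunE /=; case: (A e).
have [hc hl] := chain L [::] erefl (ltac:(by rewrite hD0)).
rewrite hD0 in hc; exists A, (D L); split => //.
rewrite ffunE -hb /final_conf; congr (xorb _ (odd _)).
have := hcnt eb (fun _ => true); rewrite count_predT => <-.
by apply: eq_count => y; rewrite andbT.
Qed.
End Proofs.

Theorem theorem1 (V E : finType) (ends : E -> V * V) (isAND : V -> bool)
    (out : V -> E) (ea eb : E) (ta tb : bool) :
  ncl_machine ends isAND out ->
  (EE_NCL ends isAND out ea ta eb tb <-> EE_ANCL ends isAND out ea ta eb tb).
Proof.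
move=> [[hs _] _ _ _ _]; split; [exact: ncl_to_ancl | exact: ancl_to_ncl].
Qed.
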